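(* Let $(X,\tau)$ be a $\mathbb{B}$-topological space and $\theta\in\mathbb{B}^X$. Then $\theta$ is compact in $(X,\tau)$ if and only if $\theta[tt]$ is a compact subset of the topological space $(X,\tau[tt])$ and $\theta[ff]$ is a compact subset of the topological space $(X,\tau[ff])$.
   Context: $\mathbb{B}=\{0,1,tt,ff\}$ is the four-element Boolean algebra with bottom $0$, top $1$, and $tt,ff$ incomparable and complements of each other; $a\to b=\neg a\vee b$. $\mathbb{B}^X$ is the set of maps $X\to\mathbb{B}$ with pointwise order and operations; for $\lambda\in\mathbb{B}^X$ and $b\in\mathbb{B}$, $\lambda[b]=\{x\in X:\lambda(x)\ge b\}$. A $\mathbb{B}$-topology on $X$ is a subset $\tau\subseteq\mathbb{B}^X$ containing all constant maps and closed under arbitrary pointwise joins and finite pointwise meets; $\tau[tt]=\{\lambda[tt]:\lambda\in\tau\}$ and $\tau[ff]=\{\lambda[ff]:\lambda\in\tau\}$ are topologies on $X$. $\mathrm{sub}_X(\lambda,\mu)=\bigwedge_{x\in X}(\lambda(x)\to\mu(x))$. $\theta\in\mathbb{B}^X$ is compact if for every pointwise-directed family $\Lambda\subseteq\tau$, $\mathrm{sub}_X(\theta,\bigvee\Lambda)=\bigvee_{\lambda\in\Lambda}\mathrm{sub}_X(\theta,\lambda)$. *)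

(* Defs.v *)
From Stdlib Require Import List Classical ClassicalEpsilon.

Inductive B4 : Type := B0 | B1 | Btt | Bff.

Definition ble (a b : B4) : bool :=
  match a, b with
  | B0, _ => true
  | _, B1 => true
  | Btt, Btt => true
  | Bff, Bff => true
  | _, _ => false
  end.

Definition bjoin (a b : B4) : B4 :=
  match a, b with
  | B0, c | c, B0 => c
  | B1, _ | _, B1 => B1
  | Btt, Btt => Btt
  | Bff, Bff => Bff
  | _, _ => B1
  end.

Definition bmeet (a b : B4) : B4 :=
  match a, b with
  | B1, c | c, B1 => c
  | B0, _ | _, B0 => B0
  | Btt, Btt => Btt
  | Bff, Bff => Bff
  | _, _ => B0
  end.

Definition bneg (a : B4) : B4 :=
  match a with B0 => B1 | B1 => B0 | Btt => Bff | Bff => Btt end.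

Definition bimpl (a b : B4) : B4 := bjoin (bneg a) b.

(* the element with given tt- and ff- "coordinates" (B ~ 2 x 2) *)
Definition bmk (t f : bool) : B4 :=
  match t, f with
  | true, true => B1 | true, false => Btt | false, true => Bff | false, false => B0
  end.

Definition pdec (P : Prop) : bool :=
  if excluded_middle_informative P then true else false.

Definition bsup (S : B4 -> Prop) : B4 :=
  bmk (pdec (exists b, S b /\ ble Btt b = true))
      (pdec (exists b, S b /\ ble Bff b = true)).

Definition binf (S : B4 -> Prop) : B4 :=
  bmk (pdec (forall b, S b -> ble Btt b = true))
      (pdec (forall b, S b -> ble Bff b = true)).

Definition pjoin {X : Type} (L : (X -> B4) -> Prop) : X -> B4 :=
  fun x => bsup (fun b => exists l, L l /\ l x = b).

Definition is_Btopology {X : Type} (tau : (X -> B4) -> Prop) : Prop :=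
  (forall c : B4, tau (fun _ => c)) /\
  (forall L : (X -> B4) -> Prop, (forall l, L l -> tau l) -> tau (pjoin L)) /\
  (forall l m, tau l -> tau m -> tau (fun x => bmeet (l x) (m x))).

(* lambda[b] = {x | lambda x >= b} *)
Definition cut {X : Type} (l : X -> B4) (b : B4) : X -> Prop :=
  fun x => ble b (l x) = true.

(* tau[b] = {lambda[b] | lambda in tau} *)
Definition cut_top {X : Type} (tau : (X -> B4) -> Prop) (b : B4) : (X -> Prop) -> Prop :=
  fun U => exists l, tau l /\ U = cut l b.

Definition subX {X : Type} (l m : X -> B4) : B4 :=
  binf (fun b => exists x, b = bimpl (l x) (m x)).

Definition pdirected {X : Type} (L : (X -> B4) -> Prop) : Prop :=
  (exists l, L l) /\
  (forall l m, L l -> L m ->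
     exists n, L n /\ forall x, ble (l x) (n x) = true /\ ble (m x) (n x) = true).

Definition Bcompact {X : Type} (tau : (X -> B4) -> Prop) (theta : X -> B4) : Prop :=
  forall L : (X -> B4) -> Prop, (forall l, L l -> tau l) -> pdirected L ->
    subX theta (pjoin L) = bsup (fun b => exists l, L l /\ b = subX theta l).

Definition compact_subset {X : Type} (T : (X -> Prop) -> Prop) (A : X -> Prop) : Prop :=
  forall (I : Type) (U : I -> X -> Prop),
    (forall i, T (U i)) -> (forall x, A x -> exists i, U i x) ->
    exists s : list I, forall x, A x -> exists i, In i s /\ U i x.

(* Main.v *)
Require Import Defs.
From Stdlib Require Import List Classical ClassicalEpsilon.
From Stdlib Require Import Bool FunctionalExtensionality.

Lemma pdec_true (P : Prop) : pdec P = true <-> P.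
Proof. unfold pdec; destruct (excluded_middle_informative P); split; intros; auto; try discriminate; contradiction. Qed.

Definition isc (c : B4) := c = Btt \/ c = Bff.

Lemma bmk_t t f : ble Btt (bmk t f) = t.
Proof. destruct t, f; reflexivity. Qed.
Lemma bmk_f t f : ble Bff (bmk t f) = f.
Proof. destruct t, f; reflexivity. Qed.

Lemma ble_bsup c S : isc c -> (ble c (bsup S) = true <-> exists b, S b /\ ble c b = true).
Proof. intros [-> | ->]; unfold bsup; rewrite ?bmk_t, ?bmk_f; apply pdec_true. Qed.

Lemma ble_binf c S : isc c -> (ble c (binf S) = true <-> forall b, S b -> ble c b = true).
Proof. intros [-> | ->]; unfold binf; rewrite ?bmk_t, ?bmk_f; apply pdec_true. Qed.

Lemma ble_bimpl c a b : isc c -> (ble c (bimpl a b) = true <-> (ble c a = true -> ble c b = true)).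
Proof. intros [-> | ->]; destruct a, b; simpl; intuition congruence. Qed.

Lemma ble_bjoin c a b : isc c -> (ble c (bjoin a b) = true <-> (ble c a = true \/ ble c b = true)).
Proof. intros [-> | ->]; destruct a, b; simpl; intuition congruence. Qed.

Lemma ble_B0 c : isc c -> ble c B0 = false.
Proof. intros [-> | ->]; reflexivity. Qed.

Lemma b4_ext a b : (ble Btt a = true <-> ble Btt b = true) ->
  (ble Bff a = true <-> ble Bff b = true) -> a = b.
Proof. destruct a, b; simpl; intuition congruence. Qed.

Lemma ble_char a b : (ble Btt a = true -> ble Btt b = true) ->
  (ble Bff a = true -> ble Bff b = true) -> ble a b = true.
Proof. destruct a, b; simpl; intuition congruence. Qed.

Lemma ble_trans c a b : ble c a = true -> ble a b = true -> ble c b = true.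
Proof. destruct c, a, b; simpl; congruence. Qed.

Lemma subX_c {X} c (th m : X -> B4) : isc c ->
  (ble c (subX th m) = true <-> forall x, cut th c x -> cut m c x).
Proof.
  intros Hc; unfold subX, cut; rewrite ble_binf by exact Hc; split.
  - intros H x. apply (ble_bimpl c (th x) (m x) Hc). apply H. eauto.
  - intros H b [x ->]. apply ble_bimpl; auto.
Qed.

Lemma pjoin_c {X} c (L : (X -> B4) -> Prop) x : isc c ->
  (ble c (pjoin L x) = true <-> exists l, L l /\ ble c (l x) = true).
Proof.
  intros Hc; unfold pjoin; rewrite ble_bsup by exact Hc; split.
  - intros [b [[l [Hl <-]] Hb]]; eauto.
  - intros [l [Hl Hb]]; eauto.
Qed.

Definition DirP {X} (tau : (X -> B4) -> Prop) (th : X -> B4) c :=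
  forall L, (forall l, L l -> tau l) -> pdirected L ->
  (forall x, cut th c x -> exists l, L l /\ cut l c x) ->
  exists l, L l /\ forall x, cut th c x -> cut l c x.

Lemma Bcompact_iff {X} (tau : (X -> B4) -> Prop) th :
  Bcompact tau th <-> DirP tau th Btt /\ DirP tau th Bff.
Proof.
  assert (K : forall c, isc c -> forall L,
    (ble c (subX th (pjoin L)) = true <-> (forall x, cut th c x -> exists l, L l /\ cut l c x))
    /\ (ble c (bsup (fun b => exists l, L l /\ b = subX th l)) = true <->
        exists l, L l /\ forall x, cut th c x -> cut l c x)).
  { intros c Hc L; split.
    - rewrite subX_c by exact Hc. unfold cut at 2. split; intros H x Hx; specialize (H x Hx).
      + apply pjoin_c in H; auto.
      + apply pjoin_c; auto.
    - rewrite ble_bsup by exact Hc. split.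
      + intros [b [[l [Hl ->]] Hb]]. exists l; split; auto. apply subX_c; auto.
      + intros [l [Hl H]]. exists (subX th l); split; eauto. apply subX_c; auto. }
  assert (Ht : isc Btt) by (left; reflexivity).
  assert (Hf : isc Bff) by (right; reflexivity).
  split.
  - intros HB; split; intros L HL HD Hcov; specialize (HB L HL HD);
      [destruct (K Btt Ht L) as [K1 K2] | destruct (K Bff Hf L) as [K1 K2]];
      apply K2; rewrite <- HB; apply K1; auto.
  - intros [D1 D2] L HL HD. apply b4_ext.
    + destruct (K Btt Ht L) as [K1 K2]. rewrite K1, K2. split; [apply D1; auto|].
      intros [l [Hl H]] x Hx. exists l; auto.
    + destruct (K Bff Hf L) as [K1 K2]. rewrite K1, K2. split; [apply D2; auto|].
      intros [l [Hl H]] x Hx. exists l; auto.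
Qed.

Lemma ble_trans2 a b d : ble a b = true -> ble b d = true -> ble a d = true.
Proof. destruct a, b, d; simpl; congruence. Qed.

Lemma upper_bound {X} (L : (X -> B4) -> Prop) : pdirected L ->
  forall s, (forall l, In l s -> L l) ->
  exists n, L n /\ forall l, In l s -> forall x, ble (l x) (n x) = true.
Proof.
  intros [[l0 H0] HD] s. induction s as [|a s IH]; intros Hs.
  - exists l0; split; [auto | intros l []].
  - destruct IH as [n [Hn Hb]]. { intros l Hl; apply Hs; right; auto. }
    destruct (HD a n) as [n' [Hn' Hb']]; auto. { apply Hs; left; auto. }
    exists n'; split; auto. intros l [<- | Hl] x.
    + apply Hb'.
    + eapply ble_trans2; [apply Hb; auto | apply Hb'].
Qed.

Lemma dir_to_compact {X} (tau : (X -> B4) -> Prop) th c : is_Btopology tau -> isc c ->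
  DirP tau th c -> compact_subset (cut_top tau c) (cut th c).
Proof.
  intros [T1 [T2 T3]] Hc HD I U HU Hcov.
  assert (F : forall i, {l | tau l /\ U i = cut l c}).
  { intro i; apply constructive_indefinite_description; apply HU. }
  set (lf := fun i => proj1_sig (F i)).
  assert (Hlf : forall i, tau (lf i) /\ U i = cut (lf i) c) by (intro i; exact (proj2_sig (F i))).
  set (fjoin := fun (s : list I) (x : X) => fold_right (fun i acc => bjoin (lf i x) acc) B0 s).
  assert (Fc : forall s x, ble c (fjoin s x) = true <-> exists i, In i s /\ ble c (lf i x) = true).
  { intros s x; induction s as [|a s IH]; simpl.
    - rewrite ble_B0 by exact Hc. split; [discriminate | intros [i [[] _]]].
    - unfold fjoin in IH |- *; simpl. rewrite ble_bjoin by exact Hc. rewrite IH. split.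
      + intros [H | [i [Hi H]]]; eauto.
      + intros [i [[<- | Hi] H]]; eauto. }
  assert (Fall : forall c', isc c' -> forall s x, ble c' (fjoin s x) = true <-> exists i, In i s /\ ble c' (lf i x) = true).
  { intros c' Hc' s x; induction s as [|a s IH]; simpl.
    - rewrite ble_B0 by exact Hc'. split; [discriminate | intros [i [[] _]]].
    - unfold fjoin in IH |- *; simpl. rewrite ble_bjoin by exact Hc'. rewrite IH. split.
      + intros [H | [i [Hi H]]]; eauto.
      + intros [i [[<- | Hi] H]]; eauto. }
  assert (Ht : isc Btt) by (left; reflexivity).
  assert (Hf : isc Bff) by (right; reflexivity).
  assert (Ftau : forall s, tau (fjoin s)).
  { induction s as [|a s IH].
    - exact (T1 B0).
    - replace (fjoin (a :: s)) with (pjoin (fun m => m = lf a \/ m = fjoin s)).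
      + apply T2. intros l [-> | ->]; auto. apply Hlf.
      + apply functional_extensionality; intro x.
        assert (E : forall c', isc c' -> (ble c' (pjoin (fun m => m = lf a \/ m = fjoin s) x) = true <-> ble c' (fjoin (a :: s) x) = true)).
        { intros c' Hc'. rewrite pjoin_c by exact Hc'.
          change (fjoin (a :: s) x) with (bjoin (lf a x) (fjoin s x)).
          rewrite ble_bjoin by exact Hc'. split.
          - intros [l [[-> | ->] H]]; auto.
          - intros [H | H]; eauto. }
        apply b4_ext; apply E; auto. }
  destruct (HD (fun m => exists s, m = fjoin s)) as [m [[s ->] Hm]].
  - intros l [s ->]; auto.
  - split.
    + exists (fjoin nil); exists nil; reflexivity.
    + intros l m [s1 ->] [s2 ->]. exists (fjoin (s1 ++ s2)); split; [eauto|].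
      intro x; split; apply ble_char; intro H;
        first [apply (Fall Btt Ht) in H | apply (Fall Bff Hf) in H];
        first [apply (Fall Btt Ht) | apply (Fall Bff Hf)];
        destruct H as [i [Hi H]]; exists i; split; auto; apply in_or_app; auto.
  - intros x Hx. destruct (Hcov x Hx) as [i Hi].
    exists (fjoin (i :: nil)); split; [eauto|].
    unfold cut. apply Fc. exists i; split; [left; auto|].
    destruct (Hlf i) as [_ E]. rewrite E in Hi. exact Hi.
  - exists s. intros x Hx. specialize (Hm x Hx). unfold cut in Hm. apply Fc in Hm.
    destruct Hm as [i [Hi H]]. exists i; split; auto.
    destruct (Hlf i) as [_ E]. rewrite E. exact H.
Qed.

Lemma compact_to_dir {X} (tau : (X -> B4) -> Prop) th c : isc c ->
  compact_subset (cut_top tau c) (cut th c) -> DirP tau th c.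
Proof.
  intros Hc HC L HL HD Hcov.
  destruct (HC {l | L l} (fun i => cut (proj1_sig i) c)) as [s Hs].
  - intros [l Hl]; simpl. exists l; split; auto.
  - intros x Hx. destruct (Hcov x Hx) as [l [Hl H]]. exists (exist _ l Hl); exact H.
  - destruct (upper_bound L HD (map (@proj1_sig _ _) s)) as [n [Hn Hb]].
    { intros l Hl. apply in_map_iff in Hl. destruct Hl as [[l' Hl'] [<- _]]; auto. }
    exists n; split; auto. intros x Hx. destruct (Hs x Hx) as [i [Hi H]].
    unfold cut in *. eapply ble_trans2; [exact H|]. apply Hb. apply in_map; auto.
Qed.

Theorem mainTheorem3 (X : Type) (tau : (X -> B4) -> Prop) (theta : X -> B4) :
  is_Btopology tau ->
  (Bcompact tau theta <->
   compact_subset (cut_top tau Btt) (cut theta Btt) /\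
   compact_subset (cut_top tau Bff) (cut theta Bff)).
Proof.
  intros HT. rewrite Bcompact_iff.
  assert (Ht : isc Btt) by (left; reflexivity).
  assert (Hf : isc Bff) by (right; reflexivity).
  split; intros [A B]; split;
    first [apply dir_to_compact | apply compact_to_dir]; auto.
Qed.
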